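(* Let $x\in[0,1)$ be rational, written in binary as $x=0.\alpha_1\alpha_2\alpha_3\ldots$ (choosing the expansion that does not end in infinitely many $1$'s). Define the walk $P_0=(0,0)$, $P_i=P_{i-1}+(1,0)$ if $\alpha_i=1$ and $P_i=P_{i-1}+(0,1)$ if $\alpha_i=0$. Let $X_i=1$ if $\gcd$ of the coordinates of $P_i$ equals $1$ and $X_i=0$ otherwise, and $\overline S_n(x)=\frac{X_1+\cdots+X_n}{n}$. Then $\lim_{n\to\infty}\overline S_n(x)$ exists and is a rational number. *)

(* Defs.v *)
From Stdlib Require Import Reals Arith ZArith.
Open Scope R_scope.

(* i-th binary digit alpha_i (i >= 1) of x in [0,1):
   alpha_i = floor(2^i x) mod 2. This is exactly the expansion that does
   not end in infinitely many 1's. Int_part is the floor function. *)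
Definition alpha (x : R) (i : nat) : bool := Z.odd (Int_part (2 ^ i * x)).

Fixpoint walk (x : R) (n : nat) : nat * nat :=
  match n with
  | O => (0%nat, 0%nat)
  | S m => let (a, b) := walk x m in
           if alpha x (S m) then (S a, b) else (a, S b)
  end.

Definition Xi (x : R) (i : nat) : nat :=
  if Nat.eqb (Nat.gcd (fst (walk x i)) (snd (walk x i))) 1 then 1%nat else 0%nat.

Fixpoint sumX (x : R) (n : nat) : nat :=
  match n with
  | O => 0%nat
  | S m => (sumX x m + Xi x (S m))%nat
  end.

Definition Sbar (x : R) (n : nat) : R := INR (sumX x n) / INR n.

(* Main.v *)
Require Import Defs.
From Stdlib Require Import Reals Arith ZArith Lia Lra Classical.
Open Scope nat_scope.

Lemma gcd_shift (u v a b M m d : nat) :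
  d = (if a * v <=? b * u then b * u - a * v else a * v - b * u) ->
  Nat.divide d M ->
  Nat.gcd (u + m * a + M * a) (v + m * b + M * b) = Nat.gcd (u + m * a) (v + m * b).
Proof.
  intros Hd HM.
  assert (key : forall g U V, Nat.divide g U -> Nat.divide g V ->
     b * U + a * v = a * V + b * u -> Nat.divide g M).
  { intros g U V HU HV E. apply Nat.divide_trans with d; auto.
    assert (HbU : Nat.divide g (b * U)) by (apply Nat.divide_mul_r; auto).
    assert (HaV : Nat.divide g (a * V)) by (apply Nat.divide_mul_r; auto).
    destruct (Nat.leb_spec (a * v) (b * u)) as [L|L]; subst d.
    - apply (Nat.divide_add_cancel_r g (a * V)); auto.
      replace (a * V + (b * u - a * v)) with (b * U) by lia. auto.
    - apply (Nat.divide_add_cancel_r g (b * U)); auto.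
      replace (b * U + (a * v - b * u)) with (a * V) by lia. auto. }
  apply Nat.divide_antisym.
  - set (g := Nat.gcd (u + m * a + M * a) (v + m * b + M * b)).
    assert (H1 : Nat.divide g (u + m * a + M * a)) by apply Nat.gcd_divide_l.
    assert (H2 : Nat.divide g (v + m * b + M * b)) by apply Nat.gcd_divide_r.
    assert (HgM : Nat.divide g M) by (apply (key g _ _ H1 H2); nia).
    apply Nat.gcd_greatest.
    + apply (Nat.divide_add_cancel_r g (M * a)); [apply Nat.divide_mul_l; auto|].
      replace (M * a + (u + m * a)) with (u + m * a + M * a) by lia. auto.
    + apply (Nat.divide_add_cancel_r g (M * b)); [apply Nat.divide_mul_l; auto|].
      replace (M * b + (v + m * b)) with (v + m * b + M * b) by lia. auto.
  - set (g := Nat.gcd (u + m * a) (v + m * b)).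
    assert (H1 : Nat.divide g (u + m * a)) by apply Nat.gcd_divide_l.
    assert (H2 : Nat.divide g (v + m * b)) by apply Nat.gcd_divide_r.
    assert (HgM : Nat.divide g M) by (apply (key g _ _ H1 H2); nia).
    apply Nat.gcd_greatest; apply Nat.divide_add_r; auto; apply Nat.divide_mul_l; auto.
Qed.

Lemma gcd_degen (u v a b m : nat) :
  b * u = a * v -> (a + b > 0)%nat -> (m >= 2)%nat ->
  Nat.gcd (u + m * a) (v + m * b) <> 1%nat.
Proof.
  intros E Hab Hm Hg.
  destruct (Nat.eq_dec a 0) as [Ha|Ha].
  - subst a. assert (u = 0%nat) by nia. subst u. rewrite Nat.mul_0_r, Nat.add_0_l, Nat.gcd_0_l in Hg. nia.
  - assert (HU : Nat.divide (u + m * a) a).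
    { apply Nat.gauss with (v + m * b); auto.
      exists b. nia. }
    apply Nat.divide_pos_le in HU; nia.
Qed.

Open Scope R_scope.

Lemma Int_part_div (p Q : Z) : (0 < Q)%Z -> Int_part (IZR p / IZR Q) = (p / Q)%Z.
Proof.
  intros HQ. unfold Int_part.
  assert (Hm := Z.mod_pos_bound p Q HQ).
  assert (Hd := Z.div_mod p Q ltac:(lia)).
  set (d := (p / Q)%Z) in *. set (m := (p mod Q)%Z) in *.
  assert (E : IZR p / IZR Q = IZR d + IZR m / IZR Q).
  { rewrite Hd, plus_IZR, mult_IZR. field. apply not_0_IZR; lia. }
  assert (HQr : 0 < IZR Q) by (apply IZR_lt; lia).
  assert (H1 : 0 <= IZR m / IZR Q).
  { apply Rmult_le_pos. apply IZR_le; lia. left; apply Rinv_0_lt_compat; lra. }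
  assert (H2 : IZR m / IZR Q < 1).
  { apply Rmult_lt_reg_r with (IZR Q); [lra|].
    unfold Rdiv. rewrite Rmult_assoc, Rinv_l by lra. rewrite Rmult_1_r, Rmult_1_l.
    apply IZR_lt; lia. }
  rewrite <- (tech_up (IZR p / IZR Q) (d + 1)). lia.
  rewrite E, plus_IZR. lra. rewrite E, plus_IZR. lra.
Qed.


Lemma pigeon (q : nat) : forall f : nat -> nat, (forall i, (i <= q)%nat -> (f i < q)%nat) ->
  exists i j, (i < j <= q)%nat /\ f i = f j.
Proof.
  induction q as [|q IH]; intros f Hf.
  - specialize (Hf 0%nat ltac:(lia)). lia.
  - destruct (classic (exists i, (i <= q)%nat /\ f i = f (S q))) as [[i [Hi E]]|Hn].
    + exists i, (S q). split; [lia|auto].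
    + destruct (Nat.eq_dec (f (S q)) q) as [Eq|Nq].
      * destruct (IH f) as [i [j [H1 H2]]].
        { intros i Hi. assert (f i < S q)%nat by (apply Hf; lia).
          assert (f i <> f (S q)) by (intro; apply Hn; exists i; auto). lia. }
        exists i, j. split; [lia|auto].
      * destruct (IH (fun i => if Nat.eq_dec (f i) q then f (S q) else f i)) as [i [j [H1 H2]]].
        { intros i Hi. assert (f (S q) < S q)%nat by (apply Hf; lia).
          assert (f i < S q)%nat by (apply Hf; lia).
          destruct (Nat.eq_dec (f i) q); lia. }
        exists i, j. split; [lia|].
        assert (f i <> f (S q)) by (intro; apply Hn; exists i; split; [lia|auto]).
        assert (f j <> f (S q)) by (intro; apply Hn; exists j; split; [lia|auto]).
        destruct (Nat.eq_dec (f i) q); destruct (Nat.eq_dec (f j) q); congruence.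
Qed.

Section Dig.
Variables (p Q : Z).
Hypothesis HQ : (0 < Q)%Z.
Definition rr (i : nat) : Z := ((2 ^ Z.of_nat i * p) mod Q)%Z.
Definition dg (i : nat) : bool := Z.odd ((2 ^ Z.of_nat i * p) / Q).

Lemma pow_S i : (2 ^ Z.of_nat (S i) * p = 2 * (2 ^ Z.of_nat i * p))%Z.
Proof. rewrite Nat2Z.inj_succ, Z.pow_succ_r by lia. ring. Qed.

Lemma rr_S i : rr (S i) = ((2 * rr i) mod Q)%Z.
Proof. unfold rr. rewrite pow_S. rewrite Z.mul_mod_idemp_r by lia. reflexivity. Qed.

Lemma dg_S i : dg (S i) = Z.odd ((2 * rr i) / Q).
Proof.
  unfold dg, rr. rewrite pow_S. set (m := (2 ^ Z.of_nat i * p)%Z).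
  assert (Hd := Z.div_mod m Q ltac:(lia)).
  replace (2 * m)%Z with ((2 * (m / Q)) * Q + 2 * (m mod Q))%Z by lia.
  rewrite Z.div_add_l by lia. rewrite Z.odd_add, Z.odd_mul. simpl. reflexivity.
Qed.
End Dig.

Lemma dg_periodic p Q : (0 < Q)%Z -> exists N T, (T > 0)%nat /\
  forall n, (n >= N)%nat -> dg p Q (n + T) = dg p Q n.
Proof.
  intros HQ.
  destruct (pigeon (Z.to_nat Q) (fun i => Z.to_nat (rr p Q i))) as [i [j [Hij E]]].
  { intros i _. unfold rr. assert (H := Z.mod_pos_bound (2 ^ Z.of_nat i * p) Q HQ). lia. }
  assert (E' : rr p Q i = rr p Q j).
  { unfold rr in *. assert (H := Z.mod_pos_bound (2 ^ Z.of_nat i * p) Q HQ).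
    assert (H' := Z.mod_pos_bound (2 ^ Z.of_nat j * p) Q HQ). lia. }
  assert (Hk : forall k, rr p Q (i + k) = rr p Q (j + k)).
  { induction k. rewrite !Nat.add_0_r; auto.
    rewrite <- !plus_n_Sm, !rr_S, IHk by auto. reflexivity. }
  exists (S i), (j - i)%nat. split; [lia|].
  intros n Hn. replace n with (S (i + (n - S i))) by lia.
  replace (S (i + (n - S i)) + (j - i))%nat with (S (j + (n - S i))) by lia.
  rewrite !dg_S, Hk; auto.
Qed.

Lemma alpha_dg x p q : (q > 0)%nat -> x = IZR p / INR q ->
  forall i, alpha x i = dg p (Z.of_nat q) i.
Proof.
  intros Hq Hx i. unfold alpha, dg. rewrite <- Int_part_div by lia.
  f_equal. rewrite Hx, INR_IZR_INZ, mult_IZR, <- pow_IZR. simpl (IZR 2).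
  unfold Rdiv. f_equal. ring.
Qed.


Lemma sumX_mono x n k : (sumX x n <= sumX x (n + k))%nat.
Proof. induction k. rewrite Nat.add_0_r; lia. rewrite <- plus_n_Sm. simpl. lia. Qed.

Lemma cesaro x K P : (P > 0)%nat -> (forall i, (i >= K)%nat -> Xi x (i + P) = Xi x i) ->
  Un_cv (Sbar x) (INR (sumX x (K + P) - sumX x K) / INR P).
Proof.
  intros HP Hper.
  set (c := (sumX x (K + P) - sumX x K)%nat).
  assert (HS : forall k, sumX x (K + k + P) = (sumX x (K + k) + c)%nat).
  { induction k.
    - rewrite Nat.add_0_r. assert (H := sumX_mono x K P). unfold c. lia.
    - replace (K + S k + P)%nat with (S (K + k + P)) by lia.
      replace (K + S k)%nat with (S (K + k)) by lia. simpl.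
      rewrite IHk. replace (S (K + k + P)) with (S (K + k) + P)%nat by lia.
      rewrite Hper by lia. lia. }
  set (E := fun n => INR P * INR (sumX x n) - INR n * INR c).
  set (Cst := INR P * INR (sumX x (K + P)) + INR (K + P) * INR c).
  assert (HE : forall m n, (K <= n)%nat -> (n < K + P + m)%nat -> Rabs (E n) <= Cst).
  { induction m; intros n H1 H2.
    - unfold E, Cst. assert (Hm := sumX_mono x n (K + P - n)).
      replace (n + (K + P - n))%nat with (K + P)%nat in Hm by lia.
      apply le_INR in Hm. assert (Hn : INR n <= INR (K + P)) by (apply le_INR; lia).
      assert (0 <= INR P) by apply pos_INR. assert (0 <= INR c) by apply pos_INR.
      assert (0 <= INR n) by apply pos_INR. assert (0 <= INR (sumX x n)) by apply pos_INR.
      apply Rabs_le. split; nra.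
    - destruct (Nat.lt_ge_cases n (K + P + m)) as [L|L]; [apply IHm; lia|].
      assert (En : E n = E (n - P)%nat).
      { unfold E. replace n with (K + (n - P - K) + P)%nat at 1 2 by lia.
        rewrite HS. replace (K + (n - P - K))%nat with (n - P)%nat by lia.
        rewrite !plus_INR. ring. }
      rewrite En. apply IHm; lia. }
  intros eps Heps.
  assert (HPr : 0 < INR P) by (apply lt_0_INR; lia).
  assert (HC : 0 <= Cst).
  { unfold Cst. assert (0 <= INR (sumX x (K + P))) by apply pos_INR.
    assert (0 <= INR (K+P)) by apply pos_INR. assert (0 <= INR c) by apply pos_INR. nra. }
  destruct (archimed (Cst / (eps * INR P))) as [Ha _].
  set (N0 := Nat.max (S K) (Z.to_nat (up (Cst / (eps * INR P))))).
  exists N0. intros n Hn. unfold R_dist, Sbar.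
  assert (Hn1 : (n >= S K)%nat) by lia.
  assert (Hnr : 0 < INR n) by (apply lt_0_INR; lia).
  assert (Hbig : Cst / (eps * INR P) < INR n).
  { eapply Rlt_le_trans. apply Ha.
    destruct (Z_lt_le_dec (up (Cst / (eps * INR P))) 0).
    - apply Rle_trans with 0. apply IZR_le; lia. lra.
    - rewrite <- (Z2Nat.id (up _)) by lia. rewrite <- INR_IZR_INZ. apply le_INR. lia. }
  assert (Hbig' : Cst < eps * (INR n * INR P)).
  { apply Rmult_lt_compat_r with (r := eps * INR P) in Hbig; [|nra].
    unfold Rdiv in Hbig. rewrite Rmult_assoc, Rinv_l in Hbig by nra. nra. }
  assert (Eq : INR (sumX x n) / INR n - INR c / INR P = E n / (INR n * INR P)).
  { unfold E. field. split; lra. }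
  rewrite Eq. unfold Rdiv. rewrite Rabs_mult, Rabs_inv, (Rabs_right (INR n * INR P)) by nra.
  assert (HEn := HE (S n) n ltac:(lia) ltac:(lia)).
  apply Rmult_lt_reg_r with (INR n * INR P). nra.
  rewrite Rmult_assoc, Rinv_l by nra. lra.
Qed.


Definition A x n := fst (walk x n).
Definition B x n := snd (walk x n).

Lemma A_S x n : A x (S n) = (A x n + if alpha x (S n) then 1 else 0)%nat.
Proof. unfold A. simpl. destruct (walk x n); destruct (alpha x (S n)); simpl; lia. Qed.
Lemma B_S x n : B x (S n) = (B x n + if alpha x (S n) then 0 else 1)%nat.
Proof. unfold B. simpl. destruct (walk x n); destruct (alpha x (S n)); simpl; lia. Qed.

Lemma AB_sum x n : (A x n + B x n = n)%nat.
Proof. induction n. reflexivity. rewrite A_S, B_S. destruct (alpha x (S n)); lia. Qed.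

Lemma A_mono x n k : (A x n <= A x (n + k))%nat.
Proof. induction k. rewrite Nat.add_0_r; lia. rewrite <- plus_n_Sm, A_S. lia. Qed.
Lemma B_mono x n k : (B x n <= B x (n + k))%nat.
Proof. induction k. rewrite Nat.add_0_r; lia. rewrite <- plus_n_Sm, B_S. lia. Qed.

Section W.
Variables (x : R) (N T : nat).
Hypothesis hper : forall n, (n >= N)%nat -> alpha x (n + T) = alpha x n.

Lemma A_shift k : (A x (N + k + T) + A x N = A x (N + k) + A x (N + T))%nat.
Proof.
  induction k. rewrite Nat.add_0_r; lia.
  replace (N + S k + T)%nat with (S (N + k + T)) by lia.
  replace (N + S k)%nat with (S (N + k)) by lia.
  rewrite !A_S. replace (S (N + k + T)) with (S (N + k) + T)%nat by lia.
  rewrite hper by lia. lia.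
Qed.
Lemma B_shift k : (B x (N + k + T) + B x N = B x (N + k) + B x (N + T))%nat.
Proof.
  induction k. rewrite Nat.add_0_r; lia.
  replace (N + S k + T)%nat with (S (N + k + T)) by lia.
  replace (N + S k)%nat with (S (N + k)) by lia.
  rewrite !B_S. replace (S (N + k + T)) with (S (N + k) + T)%nat by lia.
  rewrite hper by lia. lia.
Qed.

Lemma A_lin j m : A x (N + j + m * T) = (A x (N + j) + m * (A x (N + T) - A x N))%nat.
Proof.
  assert (Hm := A_mono x N T).
  induction m. rewrite !Nat.mul_0_l, !Nat.add_0_r; reflexivity.
  assert (H := A_shift (j + m * T)).
  replace (N + j + S m * T)%nat with (N + j + m * T + T)%nat by lia.
  replace (N + (j + m * T))%nat with (N + j + m * T)%nat in H by lia. nia.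
Qed.
Lemma B_lin j m : B x (N + j + m * T) = (B x (N + j) + m * (B x (N + T) - B x N))%nat.
Proof.
  assert (Hm := B_mono x N T).
  induction m. rewrite !Nat.mul_0_l, !Nat.add_0_r; reflexivity.
  assert (H := B_shift (j + m * T)).
  replace (N + j + S m * T)%nat with (N + j + m * T + T)%nat by lia.
  replace (N + (j + m * T))%nat with (N + j + m * T)%nat in H by lia. nia.
Qed.
End W.


Fixpoint prodf (f : nat -> nat) (k : nat) : nat :=
  match k with O => 1%nat | S k => (prodf f k * f k)%nat end.
Lemma prodf_pos f k : (forall j, f j > 0)%nat -> (prodf f k > 0)%nat.
Proof. intros H. induction k; simpl. lia. specialize (H k). nia. Qed.
Lemma prodf_div f k j : (j < k)%nat -> Nat.divide (f j) (prodf f k).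
Proof.
  induction k; intros Hj. lia. simpl.
  destruct (Nat.eq_dec j k) as [->|Hne].
  - apply Nat.divide_mul_r, Nat.divide_refl.
  - apply Nat.divide_mul_l, IHk. lia.
Qed.

Theorem theorem3 (x : R)
  (hx0 : 0 <= x) (hx1 : x < 1)
  (hrat : exists (p : Z) (q : nat), (q > 0)%nat /\ x = IZR p / INR q) :
  exists l : R, Un_cv (Sbar x) l /\
    exists (p : Z) (q : nat), (q > 0)%nat /\ l = IZR p / INR q.
Proof.
  destruct hrat as [p [q [Hq Hx]]].
  destruct (dg_periodic p (Z.of_nat q) ltac:(lia)) as [N [T [HT Hd]]].
  assert (hper : forall n, (n >= N)%nat -> alpha x (n + T) = alpha x n).
  { intros n Hn. rewrite !(alpha_dg x p q Hq Hx). apply Hd; auto. }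
  set (a := (A x (N+T) - A x N)%nat). set (b := (B x (N+T) - B x N)%nat).
  assert (Hab : (a + b = T)%nat).
  { assert (H1 := AB_sum x N). assert (H2 := AB_sum x (N + T)).
    assert (H3 := A_mono x N T). assert (H4 := B_mono x N T). unfold a, b. lia. }
  set (d := fun j => if a * B x (N + j) <=? b * A x (N + j)
                     then (b * A x (N + j) - a * B x (N + j))%nat
                     else (a * B x (N + j) - b * A x (N + j))%nat).
  set (f := fun j => if d j =? 0 then 1%nat else d j).
  set (M := prodf f T).
  assert (HM : (M > 0)%nat).
  { apply prodf_pos. intros j. unfold f. destruct (Nat.eqb_spec (d j) 0); lia. }
  set (P := (T * M)%nat).
  assert (Hper : forall i, (i >= N + 2 * T)%nat -> Xi x (i + P) = Xi x i).
  { intros i Hi.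
    set (j := ((i - N) mod T)%nat). set (m := ((i - N) / T)%nat).
    assert (Hj : (j < T)%nat) by (apply Nat.mod_upper_bound; lia).
    assert (Hdm := Nat.div_mod_eq (i - N) T). fold j m in Hdm.
    assert (Hi' : i = (N + j + m * T)%nat) by lia.
    assert (Hm2 : (m >= 2)%nat) by nia.
    assert (Hi2 : (i + P = N + j + (m + M) * T)%nat) by (unfold P; nia).
    unfold Xi. change (fst (walk x (i + P))) with (A x (i + P)).
    change (snd (walk x (i + P))) with (B x (i + P)).
    change (fst (walk x i)) with (A x i). change (snd (walk x i)) with (B x i).
    rewrite Hi2, Hi'. rewrite !(A_lin x N T hper), !(B_lin x N T hper). fold a b.
    destruct (Nat.eq_dec (d j) 0) as [Hz|Hnz].
    - assert (E : (b * A x (N + j) = a * B x (N + j))%nat).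
      { unfold d in Hz. destruct (Nat.leb_spec (a * B x (N + j)) (b * A x (N + j))); lia. }
      rewrite (proj2 (Nat.eqb_neq _ _) (gcd_degen _ _ a b (m + M) E ltac:(lia) ltac:(lia))).
      rewrite (proj2 (Nat.eqb_neq _ _) (gcd_degen _ _ a b m E ltac:(lia) ltac:(lia))).
      reflexivity.
    - rewrite !Nat.mul_add_distr_r, !Nat.add_assoc.
      rewrite (gcd_shift _ _ a b M m (d j)); auto.
      assert (Hf : f j = d j) by (unfold f; destruct (Nat.eqb_spec (d j) 0); lia).
      rewrite <- Hf. apply prodf_div; auto. }
  exists (INR (sumX x (N + 2 * T + P) - sumX x (N + 2 * T)) / INR P). split.
  - apply cesaro; auto. unfold P; nia.
  - exists (Z.of_nat (sumX x (N + 2 * T + P) - sumX x (N + 2 * T))), P. split.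
    unfold P; nia. rewrite <- INR_IZR_INZ. reflexivity.
Qed.
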